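(* Let $\mathbb X$ be a Cornish space of type $F$ and $\mathbf A=E(\mathbb X)$. Then the lattice of congruences of $\mathbf A$ is dually isomorphic to the lattice $\mathrm{Sub}\,\mathbb X$ of topologically closed substructures of $\mathbb X$ (including the empty one). In particular, $\mathbf A$ is simple if and only if $\mathbb X$ has no non-empty proper closed substructures.
   Context: $F=F^+\,\dot\cup\,F^-$ is a set of unary operation symbols. A Cornish space of type $F$ is a Priestley space $\langle X;\le,\mathscr T\rangle$ with unary operations $f^{\mathbb X}$ ($f\in F$) that are continuous order-preserving for $f\in F^+$ and continuous order-reversing for $f\in F^-$. A closed substructure is a topologically closed subset closed under every $f^{\mathbb X}$. $E(\mathbb X)$ is the Cornish algebra on the set of continuous order-preserving maps $\alpha\colon\langle X;\le,\mathscr T\rangle\to\mathbbm 2$ (the discrete two-element chain), with pointwise lattice operations and bounds, and $f^{E(\mathbb X)}(\alpha)=\alpha\circ f^{\mathbb X}$ for $f\in F^+$, $f^{E(\mathbb X)}(\alpha)=c\circ\alpha\circ f^{\mathbb X}$ for $f\in F^-$, where $c$ is Boolean complement on $\{0,1\}$. *)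

(* Defs.v *)
From HB Require Import structures.
From mathcomp Require Import all_boot all_order.
From mathcomp Require Import all_classical all_reals topology.
Set Implicit Arguments. Unset Strict Implicit. Unset Printing Implicit Defensive.
Local Open Scope classical_set_scope.

Definition partial_order (T : Type) (le : T -> T -> Prop) :=
  [/\ (forall x, le x x),
      (forall x y, le x y -> le y x -> x = y) &
      (forall x y z, le x y -> le y z -> le x z)].

Definition upset (T : Type) (le : T -> T -> Prop) (U : set T) :=
  forall x y, U x -> le x y -> U y.

Definition priestley_space (T : topologicalType) (le : T -> T -> Prop) :=
  [/\ partial_order le, compact [set: T] &
      (forall x y, ~ le x y ->
         exists U : set T, [/\ clopen U, upset le U, U x & ~ U y])].

Definition order_preserving (T : Type) (le : T -> T -> Prop) (g : T -> T) :=
  forall x y, le x y -> le (g x) (g y).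
Definition order_reversing (T : Type) (le : T -> T -> Prop) (g : T -> T) :=
  forall x y, le x y -> le (g y) (g x).

(* Type F = F^+ \dot\cup F^- : an index type F with sign : F -> bool,
   where sign f = true means f \in F^+ and sign f = false means f \in F^-.
   op f is the interpretation f^X. *)
Definition cornish_space (F : Type) (sign : F -> bool)
    (T : topologicalType) (le : T -> T -> Prop) (op : F -> T -> T) :=
  priestley_space le /\
  forall f, continuous (op f) /\
    (if sign f then order_preserving le (op f) else order_reversing le (op f)).

Definition closed_substructure (F : Type) (T : topologicalType)
    (op : F -> T -> T) (Y : set T) :=
  closed Y /\ forall f y, Y y -> Y (op f y).

(* Carrier of E(X): continuous order-preserving maps X -> 2
   (bool with its discrete topology, false < true). *)
Definition in_E (T : topologicalType) (le : T -> T -> Prop) (a : T -> bool) :=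
  continuous a /\ forall x y, le x y -> (a x ==> a y).

Definition E_meet (T : Type) (a b : T -> bool) : T -> bool := fun x => a x && b x.
Definition E_join (T : Type) (a b : T -> bool) : T -> bool := fun x => a x || b x.
Definition E_op (F : Type) (sign : F -> bool) (T : Type) (op : F -> T -> T)
    (f : F) (a : T -> bool) : T -> bool :=
  if sign f then (fun x => a (op f x)) else (fun x => ~~ a (op f x)).

(* Congruences of E(X), as binary relations on T -> bool supported on
   the carrier of E(X). (The bounds are nullary and impose no condition.) *)
Definition is_congruence (F : Type) (sign : F -> bool) (T : topologicalType)
    (le : T -> T -> Prop) (op : F -> T -> T)
    (th : (T -> bool) -> (T -> bool) -> Prop) :=
  [/\ (forall a b, th a b -> in_E le a /\ in_E le b),
      (forall a, in_E le a -> th a a),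
      (forall a b, th a b -> th b a),
      (forall a b c, th a b -> th b c -> th a c) &
      [/\ (forall a b c d, th a b -> th c d -> th (E_meet a c) (E_meet b d)),
          (forall a b c d, th a b -> th c d -> th (E_join a c) (E_join b d)) &
          (forall f a b, th a b -> th (E_op sign op f a) (E_op sign op f b))]].

Definition Con_E (F : Type) (sign : F -> bool) (T : topologicalType)
    (le : T -> T -> Prop) (op : F -> T -> T) :=
  {th : (T -> bool) -> (T -> bool) -> Prop | is_congruence sign le op th}.

Definition Sub_X (F : Type) (T : topologicalType) (op : F -> T -> T) :=
  {Y : set T | closed_substructure op Y}.

Definition rel_sub (A : Type) (r s : A -> A -> Prop) := forall a b, r a b -> s a b.

Definition E_simple (F : Type) (sign : F -> bool) (T : topologicalType)
    (le : T -> T -> Prop) (op : F -> T -> T) :=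
  (exists a b, [/\ in_E le a, in_E le b & a <> b]) /\
  forall th, is_congruence sign le op th ->
    th = (fun a b => in_E le a /\ a = b) \/
    th = (fun a b => in_E le a /\ in_E le b).

(* Main.v *)
From HB Require Import structures.
From mathcomp Require Import all_boot all_order.
From mathcomp Require Import all_classical all_reals topology.
From mathcomp Require Import finmap.
Local Open Scope classical_set_scope.

Require Import Defs.

Definition ptT (T : topologicalType) (x0 : T) : Type := T.
Section PtAlias.
Variable (T : topologicalType) (x0 : T).
HB.instance Definition _ := Topological.on (@ptT T x0).
HB.instance Definition _ := isPointed.Build (@ptT T x0) x0.
End PtAlias.

Lemma compact_cover_any (T : topologicalType) (A : set T) :
  compact A -> cover_compact A.
Proof.
move=> cA I D f fo Ac.
have [[x0 _]|nA] := pselect (exists x, A x); last first.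
  exists fset0; first by move=> i; rewrite inE.
  by move=> x Ax; exfalso; apply: nA; exists x.
have H : @compact (@ptT T x0) A := cA.
rewrite compact_cover in H.
exact: H I D f fo Ac.
Qed.

Lemma bpre_open (T : topologicalType) (a : T -> bool) (P : set bool) :
  continuous a -> open (a @^-1` P).
Proof. by move=> /continuousP; apply; exact: discrete_open. Qed.

Lemma bpre_closed (T : topologicalType) (a : T -> bool) (P : set bool) :
  continuous a -> closed (a @^-1` P).
Proof. by move=> ca; rewrite -openC preimage_setC; exact: bpre_open. Qed.

Lemma cont2 (T : topologicalType) (c d : T -> bool) (g : bool -> bool -> bool) :
  continuous c -> continuous d -> continuous (fun x => g (c x) (d x)).
Proof.
move=> cc cd; apply/continuousP => A _.
have -> : (fun x => g (c x) (d x)) @^-1` A =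
   (c @^-1` [set true] `&` d @^-1` [set y | A (g true y)]) `|`
   (c @^-1` [set false] `&` d @^-1` [set y | A (g false y)]).
  apply/seteqP; split => x /=.
    by case: (c x) => H; [left|right].
  by case=> -[/= ->].
by apply: openU; apply: openI; apply: bpre_open.
Qed.

Lemma cont_comp1 (T : topologicalType) (a : T -> bool) (o : T -> T) (h : bool -> bool) :
  continuous a -> continuous o -> continuous (fun x => h (a (o x))).
Proof.
move=> ca co; apply/continuousP => A _.
have -> : (fun x => h (a (o x))) @^-1` A = o @^-1` (a @^-1` [set y | A (h y)]) by [].
by move/continuousP: co; apply; apply: bpre_open.
Qed.

Lemma cont_ind (T : topologicalType) (U : set T) :
  clopen U -> continuous (fun t => `[< U t >]).
Proof.
move=> [oU cU]; apply/continuousP => A _.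
have -> : (fun t => `[< U t >]) @^-1` A =
   (U `&` [set _ | A true]) `|` (~` U `&` [set _ | A false]).
  apply/seteqP; split => x /=.
    by case: (asboolP (U x)) => H; [left|right].
  by case=> -[H1 H2]; [rewrite asboolT | rewrite asboolF].
have ocst (P : Prop) : open [set _ : T | P].
  by have [p|np] := pselect P; [rewrite (_ : [set _ | P] = setT); [exact: openT|apply/seteqP; split]
   | rewrite (_ : [set _ | P] = set0); [exact: open0|apply/seteqP; split]].
apply: openU; apply: openI => //; by rewrite openC.
Qed.
Set Implicit Arguments. Unset Strict Implicit.

Lemma inE_meet (T : topologicalType) (le : T -> T -> Prop) a b :
  in_E le a -> in_E le b -> in_E le (E_meet a b).
Proof.
move=> [ca ma] [cb mb]; split; first exact: (@cont2 _ a b andb ca cb).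
move=> x y lxy; move: (ma x y lxy) (mb x y lxy); rewrite /E_meet.
by case: (a x); case: (a y); case: (b x); case: (b y).
Qed.

Lemma inE_join (T : topologicalType) (le : T -> T -> Prop) a b :
  in_E le a -> in_E le b -> in_E le (E_join a b).
Proof.
move=> [ca ma] [cb mb]; split; first exact: (@cont2 _ a b orb ca cb).
move=> x y lxy; move: (ma x y lxy) (mb x y lxy); rewrite /E_join.
by case: (a x); case: (a y); case: (b x); case: (b y).
Qed.

Lemma inE_cst (T : topologicalType) (le : T -> T -> Prop) (v : bool) :
  in_E le (fun _ => v).
Proof. by split; [exact: cst_continuous| move=> x y _; exact: implybb]. Qed.

Lemma inE_op (F : Type) (sign : F -> bool) (T : topologicalType)
    (le : T -> T -> Prop) (op : F -> T -> T) f a :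
  cornish_space sign le op -> in_E le a -> in_E le (E_op sign op f a).
Proof.
move=> [_ H] [ca ma]; have [cf mf] := H f; rewrite /E_op.
case: (sign f) mf => mf; split.
- exact: (@cont_comp1 _ a (op f) id ca cf).
- by move=> x y lxy; apply: ma; apply: mf.
- exact: (@cont_comp1 _ a (op f) negb ca cf).
- move=> x y lxy; have := ma _ _ (mf x y lxy).
  by case: (a (op f x)); case: (a (op f y)).
Qed.

Definition Y_of (T : Type) (th : (T -> bool) -> (T -> bool) -> Prop) : set T :=
  [set x | forall a b, th a b -> a x = b x].

Definition thY (T : topologicalType) (le : T -> T -> Prop) (Y : set T) :=
  fun a b => [/\ in_E le a, in_E le b & forall y, Y y -> a y = b y].

Lemma eqset_closed (T : topologicalType) (c d : T -> bool) :
  continuous c -> continuous d -> closed [set x | c x = d x].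
Proof.
move=> cc cd.
have -> : [set x | c x = d x] = (fun x => c x == d x) @^-1` [set true].
  by apply/seteqP; split => x /=; move/eqP.

apply: (@bpre_closed _ (fun x => c x == d x) [set true]).
exact: (@cont2 _ c d (fun u v => u == v) cc cd).
Qed.

Lemma Y_sub (F : Type) (sign : F -> bool) (T : topologicalType)
    (le : T -> T -> Prop) (op : F -> T -> T) th :
  is_congruence sign le op th -> closed_substructure op (Y_of th).
Proof.
move=> [supp _ _ _ [_ _ cop]]; split.
  have -> : Y_of th = \bigcap_(p in [set p | th p.1 p.2]) [set x | p.1 x = p.2 x].
    apply/seteqP; split => x /=.
      by move=> H [a b] /= tab; apply: H.
    by move=> H a b tab; exact: (H (a, b) tab).
  apply: closed_bigI => -[a b] /= /supp [[ca _] [cb _]].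
  exact: eqset_closed.
move=> f y Yy a b tab; have := Yy _ _ (cop f a b tab); rewrite /E_op.
by case: (sign f) => //= /negb_inj.
Qed.

Lemma thY_cong (F : Type) (sign : F -> bool) (T : topologicalType)
    (le : T -> T -> Prop) (op : F -> T -> T) Y :
  cornish_space sign le op -> closed_substructure op Y ->
  is_congruence sign le op (thY le Y).
Proof.
move=> cs [_ Ysub]; split.
- by move=> a b [].
- by move=> a Ea; split.
- by move=> a b [Ea Eb H]; split => // y Yy; rewrite H.
- by move=> a b c [Ea Eb H1] [_ Ec H2]; split => // y Yy; rewrite H1 // H2.
split.
- move=> a b c d [Ea Eb H1] [Ec Ed H2]; split; try exact: inE_meet.
  by move=> y Yy; rewrite /E_meet /= H1 // H2.
- move=> a b c d [Ea Eb H1] [Ec Ed H2]; split; try exact: inE_join.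
  by move=> y Yy; rewrite /E_join /= H1 // H2.
- move=> f a b [Ea Eb H]; split; try exact: inE_op.
  by move=> y Yy; rewrite /E_op; case: (sign f); rewrite /= H //; apply: Ysub.
Qed.
Set Implicit Arguments. Unset Strict Implicit.

Definition downset (T : Type) (le : T -> T -> Prop) (W : set T) :=
  forall u v, W v -> le u v -> W u.

Definition good (T : topologicalType) (le : T -> T -> Prop) (x : T)
   (p : (set T * set T)%type) :=
  [/\ clopen p.1, upset le p.1, ~ p.1 x & [/\ clopen p.2, downset le p.2 & ~ p.2 x]].

Lemma good_fold (T : topologicalType) (le : T -> T -> Prop) (x : T)
   (s : seq (set T * set T)%type) :
  (forall p, p \in s -> good le x p) ->
  exists q, good le x q /\ forall p, p \in s -> p.1 `<=` q.1 /\ p.2 `<=` q.2.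
Proof.
elim: s => [|p s IH] H.
  exists (set0, set0); split; last by [].
  split; [exact: clopen0 | by move=> u v [] | by [] |].
  split; [exact: clopen0 | by move=> u v [] | by []].
have [|q [gq Hq]] := IH.
  by move=> r rs; apply: H; rewrite in_cons rs orbT.
have := H p; rewrite in_cons eqxx => /(_ isT) [c1 u1 n1 [c2 d2 n2]].
case: gq => [c1' u1' n1' [c2' d2' n2']].
exists (p.1 `|` q.1, p.2 `|` q.2); split.
  split => /=; try exact: clopenU.
  - by move=> u v [] H1 H2; [left; apply: u1 H1 H2|right; apply: u1' H1 H2].
  - by case.
  split => /=; try exact: clopenU.
  - by move=> u v [] H1 H2; [left; apply: d2 H1 H2|right; apply: d2' H1 H2].
  - by case.
move=> r; rewrite in_cons => /orP [/eqP ->|rs] /=.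
  by split => t ?; left.
by have [h1 h2] := Hq r rs; split => t ?; right; [apply: h1|apply: h2].
Qed.

Lemma sep (T : topologicalType) (le : T -> T -> Prop) (Y : set T) (x : T) :
  priestley_space le -> closed Y -> ~ Y x ->
  exists a b, [/\ in_E le a, in_E le b, (forall y, Y y -> a y = b y) & a x <> b x].
Proof.
move=> [[_ antisym _] cT psep] cY nYx.
have cpY : compact Y by apply: (subclosed_compact cY cT).
have Hcov : Y `<=` cover (good le x) (fun p => p.1 `|` p.2).
  move=> y Yy.
  have [lxy|nlxy] := pselect (le x y).
    have nlyx : ~ le y x by move=> lyx; apply: nYx; rewrite (antisym _ _ lxy lyx).
    have [U [cU uU Uy nUx]] := psep _ _ nlyx.
    exists (U, set0) => /=; last by left.
    split => //=; split => //=; try exact: clopen0; try by move=> u v [].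
  have [U [cU uU Ux nUy]] := psep _ _ nlxy.
  exists (set0, ~` U) => /=; last by right.
  split => //=; try exact: clopen0; try by move=> u v [].
  split => //=.
  - exact: clopenC.
  - by move=> u v nUv luv Uu; apply: nUv; apply: uU Uu luv.
have Hop : forall p, good le x p -> open (p.1 `|` p.2).
  by move=> p [[o1 _] _ _ [[o2 _] _ _]]; apply: openU.
have [D' sD' Ycov] := @compact_cover_any _ _ cpY _ _ _ Hop Hcov.
have [|q [[c1 u1 n1 [c2 d2 n2]] Hq]] := @good_fold T le x (enum_fset D').
  by move=> p pD; have := sD' p pD; rewrite in_setE.
exists (fun t => `[< q.1 t >]), (fun t => `[< (q.1 `|` ~` q.2) t >]); split.
- split; first exact: cont_ind.
  move=> u v luv; case: (asboolP (q.1 u)) => // H.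
  by rewrite asboolT //; apply: u1 H luv.
- split; first by apply: cont_ind; apply: clopenU => //; apply: clopenC.
  move=> u v luv; case: (asboolP ((q.1 `|` ~` q.2) u)) => // -[H|H].
    by rewrite asboolT //; left; apply: u1 H luv.
  by rewrite asboolT //; right => H2; apply: H; apply: d2 H2 luv.
- move=> y /Ycov [p pD [H|H]]; have [h1 h2] := Hq p pD.
    by rewrite !asboolT //; [left|]; apply: h1.
  have q2y : q.2 y by apply: h2.
  case: (asboolP (q.1 y)) => q1y; first by rewrite asboolT //; left.
  by rewrite asboolF // => -[].
- by rewrite asboolF // asboolT //; right.
Qed.
Set Implicit Arguments. Unset Strict Implicit.

Section Main.
Context (F : Type) (sign : F -> bool) (T : topologicalType)
    (le : T -> T -> Prop) (op : F -> T -> T)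
    (th : (T -> bool) -> (T -> bool) -> Prop)
    (cth : is_congruence sign le op th).

Lemma th_refl a : in_E le a -> th a a.
Proof. by case: cth => _ r _ _ _; apply: r. Qed.
Lemma th_sym a b : th a b -> th b a.
Proof. by case: cth => _ _ s _ _; apply: s. Qed.
Lemma th_trans a b c : th a b -> th b c -> th a c.
Proof. by case: cth => _ _ _ t _; apply: t. Qed.
Lemma th_supp a b : th a b -> in_E le a /\ in_E le b.
Proof. by case: cth => s _ _ _ _; apply: s. Qed.
Lemma th_meet a b c d : th a b -> th c d -> th (E_meet a c) (E_meet b d).
Proof. by case: cth => _ _ _ _ [m _ _]; apply: m. Qed.
Lemma th_join a b c d : th a b -> th c d -> th (E_join a c) (E_join b d).
Proof. by case: cth => _ _ _ _ [_ j _]; apply: j. Qed.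

Lemma th_lohi c d : th c d -> th (E_meet c d) (E_join c d).
Proof.
move=> tcd; have [_ Ed] := th_supp tcd.
have dd := th_refl Ed.
have h1 := th_meet tcd dd; have h2 := th_join tcd dd.
have e0 : E_meet d d = d by apply: funext => t; rewrite /E_meet andbb.
rewrite e0 in h1.
have e : E_join d d = d by apply: funext => t; rewrite /E_join orbb.
rewrite e in h2.
exact: th_trans h1 (th_sym h2).
Qed.

Definition Pgood (p : (T -> bool) * (T -> bool)) :=
  th p.1 p.2 /\ forall t, p.1 t -> p.2 t.

Lemma chain (pick : T -> (T -> bool) * (T -> bool)) (s : seq T) :
  (forall z, z \in s -> Pgood (pick z)) ->
  forall a b, in_E le a -> in_E le b -> (forall t, a t -> b t) ->
  (forall t, b t -> ~~ a t -> exists2 z, z \in s & (pick z).2 t && ~~ (pick z).1 t) ->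
  th a b.
Proof.
elim: s => [|z s IH] Hs a b Ea Eb ab Hc.
  have -> : a = b.
    apply: funext => t; case At: (a t); first by rewrite ab.
    case Bt: (b t) => //; by have [z] := Hc t Bt (negbT At).
  exact: th_refl.
have [tcd cd] := Hs z (mem_head _ _).
set c := (pick z).1 in tcd cd *; set d := (pick z).2 in tcd cd *.
have [Ec Ed] := th_supp tcd.
have IH' := IH (fun z' z's => Hs z' (@mem_behead _ (z :: s) z' z's)).
pose m1 := E_join a (E_meet b c); pose m2 := E_join a (E_meet b d).
have Em1 : in_E le m1 by apply: inE_join => //; apply: inE_meet.
have Em2 : in_E le m2 by apply: inE_join => //; apply: inE_meet.
have t1 : th a m1.
  apply: IH' => // t; rewrite /m1 /E_join /E_meet.
    by move=> ->.
  move=> /orP [->//|/andP [bt ct]] nat.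
  have [z' z'in /andP [d't nc't]] := Hc t bt nat.
  move: z'in; rewrite in_cons => /orP [/eqP ez|z's].
    by move: nc't; rewrite ez -/c ct.
  by exists z' => //; rewrite d't nc't.
have t2 : th m1 m2.
  by apply: th_join; [exact: th_refl|apply: th_meet => //; exact: th_refl].
have t3 : th m2 b.
  apply: IH' => // t; rewrite /m2 /E_join /E_meet.
    by move=> /orP [/ab|/andP []].
  move=> bt; rewrite negb_or => /andP [nat]; rewrite bt /= => ndt.
  have [z' z'in /andP [d't nc't]] := Hc t bt nat.
  move: z'in; rewrite in_cons => /orP [/eqP ez|z's].
    by move: d't; rewrite ez -/d (negbTE ndt).
  by exists z' => //; rewrite d't nc't.
exact: th_trans (th_trans t1 t2) t3.
Qed.

Lemma mainT (cT : compact [set: T]) a b :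
  in_E le a -> in_E le b -> (forall y, Y_of th y -> a y = b y) -> th a b.
Proof.
move=> Ea Eb Hab.
pose lo := E_meet a b; pose hi := E_join a b.
have Elo : in_E le lo by apply: inE_meet.
have Ehi : in_E le hi by apply: inE_join.
pose S := [set t | hi t && ~~ lo t].
have Hex : forall x, exists p : (T -> bool) * (T -> bool),
    S x -> Pgood p /\ (p.2 x && ~~ p.1 x).
  move=> x; have [Sx|nSx] := pselect (S x); last by exists (lo, lo).
  have nY : ~ Y_of th x.
    move=> /Hab; move: Sx; rewrite /S /= /hi /lo /E_join /E_meet.
    by case: (a x); case: (b x).
  have [c [d [tcd ncd]]] : exists c d, th c d /\ c x <> d x.
    apply: contrapT => H; apply: nY => c d tcd.
    by apply: contrapT => ncd; apply: H; exists c, d.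
  exists (E_meet c d, E_join c d) => _; split; first split.
  - exact: th_lohi.
  - by move=> t /=; rewrite /E_meet /E_join => /andP [->].
  - by move: ncd; rewrite /= /E_meet /E_join; case: (c x); case: (d x).
pose pick x := projT1 (cid (Hex x)).
have Hpick x : S x -> Pgood (pick x) /\ ((pick x).2 x && ~~ (pick x).1 x).
  exact: (projT2 (cid (Hex x))).
have cS : closed S.
  have [chi _] := Ehi; have [clo _] := Elo.
  exact: (@bpre_closed _ (fun t => hi t && ~~ lo t) [set true]
     (@cont2 _ hi lo (fun u v => u && ~~ v) chi clo)).
have cpS : compact S by apply: (subclosed_compact cS cT).
pose f x := [set t | (pick x).2 t && ~~ (pick x).1 t].
have Hop : forall x, S x -> open (f x).
  move=> x /Hpick [[/th_supp [[c1 _] [c2 _]] _] _].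
  exact: (@bpre_open _ (fun t => (pick x).2 t && ~~ (pick x).1 t) [set true]
     (@cont2 _ _ _ (fun u v => u && ~~ v) c2 c1)).
have Hcov : S `<=` cover S f by move=> x Sx; exists x => //; case: (Hpick x Sx).
have [D' sD' Scov] := @compact_cover_any _ _ cpS _ _ _ Hop Hcov.
have tlh : th lo hi.
  apply: (@chain pick (enum_fset D')) => //.
  - move=> z zD; have := sD' z zD; rewrite in_setE => /Hpick [] //.
  - by move=> t; rewrite /lo /hi /E_meet /E_join => /andP [->].
  - by move=> t ht nlt; have [z zD fz] := Scov t (introT andP (conj ht nlt)); exists z.
have e1 : th (E_meet a lo) (E_meet a hi) by apply: th_meet => //; exact: th_refl.
have e2 : th (E_meet b lo) (E_meet b hi) by apply: th_meet => //; exact: th_refl.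
have q1 : E_meet a lo = lo.
  by apply: funext => t; rewrite /E_meet /lo /E_meet; case: (a t).
rewrite q1 in e1.
have q2 : E_meet a hi = a.
  by apply: funext => t; rewrite /E_meet /hi /E_join; case: (a t).
rewrite q2 in e1.
have q3 : E_meet b lo = lo.
  by apply: funext => t; rewrite /E_meet /lo /E_meet; case: (a t); case: (b t).
rewrite q3 in e2.
have q4 : E_meet b hi = b.
  by apply: funext => t; rewrite /E_meet /hi /E_join; case: (a t); case: (b t).
rewrite q4 in e2.
exact: th_trans (th_sym e1) e2.
Qed.

End Main.

Lemma sig_eq (A : Type) (P : A -> Prop) (x y : {a | P a}) :
  sval x = sval y -> x = y.
Proof.
case: x => x px; case: y => y py /= e; subst y.
by rewrite (Prop_irrelevance px py).
Qed.

Theorem lemma5p5 (F : Type) (sign : F -> bool) (T : topologicalType)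
    (le : T -> T -> Prop) (op : F -> T -> T) :
  cornish_space sign le op ->
  (exists Phi : Con_E sign le op -> Sub_X op,
     bijective Phi /\
     forall th ps : Con_E sign le op,
       rel_sub (sval th) (sval ps) <-> (sval (Phi ps) `<=` sval (Phi th)))
  /\
  (E_simple sign le op <->
     ([set: T] !=set0 /\
      forall Y : set T, closed_substructure op Y -> Y = set0 \/ Y = setT)).
Proof.
move=> cs; have ps := proj1 cs; have cT : compact [set: T] by case: ps.
have YthY : forall Y, closed Y -> Y_of (thY le Y) = Y.
  move=> Y cY; apply/seteqP; split => x.
    move=> Hx; apply: contrapT => nYx.
    have [c [d [Ec Ed agr ncd]]] := sep ps cY nYx.
    by apply: ncd; apply: Hx; split.
  by move=> Yx a b [_ _]; apply.
have thYY : forall th, is_congruence sign le op th -> thY le (Y_of th) = th.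
  move=> th cth; apply: funext => a; apply: funext => b; apply: propext; split.
    by move=> [Ea Eb H]; apply: (mainT cth cT Ea Eb H).
  move=> tab; have [Ea Eb] := th_supp cth tab; split => // y; exact.
pose Phi (th : Con_E sign le op) : Sub_X op :=
  exist _ (Y_of (sval th)) (Y_sub (svalP th)).
pose Psi (Y : Sub_X op) : Con_E sign le op :=
  exist _ (thY le (sval Y)) (thY_cong cs (svalP Y)).
split.
  exists Phi; split.
    exists Psi.
      by move=> th; apply: sig_eq => /=; apply: thYY; exact: (svalP th).
    by move=> Y; apply: sig_eq => /=; apply: YthY; exact: (proj1 (svalP Y)).
  move=> th ps'; split.
    by move=> H x /= Yx a b tab; apply: Yx; apply: H.
  move=> H a b tab; rewrite -(thYY _ (svalP ps')).
  have [Ea Eb] := th_supp (svalP th) tab; split => // y Yy.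
  exact: (H y Yy a b tab).
split.
  move=> [[a [b [Ea Eb nab]]] Hs]; split.
    apply: contrapT => ne; apply: nab; apply: funext => t; exfalso.
    by apply: ne; exists t.
  move=> Y cY; case: (Hs _ (thY_cong cs cY)) => E.
    right; apply/seteqP; split => // x _; apply: contrapT => nYx.
    have [c [d [Ec Ed agr ncd]]] := sep ps (proj1 cY) nYx.
    have : thY le Y c d by split.
    by rewrite E => -[_ e]; apply: ncd; rewrite e.
  left; apply/seteqP; split => // y Yy.
  have : thY le Y (fun _ => false) (fun _ => true) by rewrite E; split; apply: inE_cst.
  by case=> _ _ /(_ y Yy).
move=> [[x _] HY]; split.
  exists (fun _ => false), (fun _ => true); split; try apply: inE_cst.
  by move=> e; have := congr1 (fun g => g x) e.
move=> th cth; case: (HY _ (Y_sub cth)) => E.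
  right; apply: funext => a; apply: funext => b; apply: propext; split.
    by move=> tab; apply: (th_supp cth tab).
  move=> [Ea Eb]; apply: (mainT cth cT Ea Eb) => y Yy.
  by rewrite E in Yy.
left; apply: funext => a; apply: funext => b; apply: propext; split.
  move=> tab; have [Ea _] := th_supp cth tab; split => //.
  apply: funext => t; have : Y_of th t by rewrite E.
  by apply.
by move=> [Ea <-]; apply: (th_refl cth Ea).
Qed.
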